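(* Let $A$ be a group with a free subgroup $F\leqslant A$, and let $g\in A\setminus\{1\}$ be an element of finite order. Suppose that every finite index subgroup of $F$ is separable in $A$. Then there exists a finite index normal subgroup $N\lhd A$ such that $\psi(g)\notin \psi(F)^{A/N}$, where $\psi:A\to A/N$ is the natural epimorphism.
   Context: A subset of a group $A$ is separable if it is closed in the profinite topology of $A$. For subsets $C,D$ of a group, $C^D=\{dcd^{-1}\mid c\in C,d\in D\}$. *)

(* Defs.v *)
From Stdlib Require Import List.
Import ListNotations.

Record group := Group {
  carrier :> Type;
  gmul : carrier -> carrier -> carrier;
  gone : carrier;
  ginv : carrier -> carrier;
  gmulA : forall x y z, gmul x (gmul y z) = gmul (gmul x y) z;
  gmul1 : forall x, gmul gone x = x;
  gmulV : forall x, gmul (ginv x) x = gone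
}.

Arguments gmul {A} : rename.
Arguments gone {A} : rename.
Arguments ginv {A} : rename.

Section Defs.
Variable A : group.

Definition is_subgroup (H : A -> Prop) : Prop :=
  H gone /\ (forall x y, H x -> H y -> H (gmul x y)) /\
  (forall x, H x -> H (ginv x)).

Definition is_normal_subgroup (N : A -> Prop) : Prop :=
  is_subgroup N /\ forall a n, N n -> N (gmul (gmul a n) (ginv a)).

Definition finite_index_in (K H : A -> Prop) : Prop :=
  exists l : list A, forall x, K x ->
    exists t, In t l /\ K t /\ H (gmul (ginv t) x).

Definition finite_index (H : A -> Prop) : Prop :=
  finite_index_in (fun _ => True) H.

Definition profinite_open (U : A -> Prop) : Prop :=
  forall x, U x -> exists N, is_normal_subgroup N /\ finite_index N /\
    forall n, N n -> U (gmul x n).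

Definition profinite_closed (S : A -> Prop) : Prop :=
  profinite_open (fun x => ~ S x).

Definition separable (S : A -> Prop) : Prop := profinite_closed S.

Fixpoint gpow (x : A) (n : nat) : A :=
  match n with 0 => gone | S k => gmul x (gpow x k) end.

Definition finite_order (g : A) : Prop :=
  exists n, 0 < n /\ gpow g n = gone.

(* Words in X^{+-1}: a letter (b, x) stands for x if b = true, x^-1 otherwise. *)
Fixpoint eval_word (w : list (bool * A)) : A :=
  match w with
  | [] => gone
  | (b, x) :: w' => gmul (if b then x else ginv x) (eval_word w')
  end.

Definition word_over (X : A -> Prop) (w : list (bool * A)) : Prop :=
  Forall (fun p => X (snd p)) w.

Fixpoint reduced (w : list (bool * A)) : Prop :=
  match w with
  | [] => True
  | (b, x) :: w' =>
      match w' with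
      | [] => True
      | (b', x') :: _ => ~ (x = x' /\ b <> b')
      end /\ reduced w'
  end.

Definition freely_generated (F X : A -> Prop) : Prop :=
  (forall f, F f <-> exists w, word_over X w /\ eval_word w = f) /\
  (forall w, word_over X w -> reduced w -> w <> [] -> eval_word w <> gone).

Definition is_free_subgroup (F : A -> Prop) : Prop :=
  is_subgroup F /\ exists X, freely_generated F X.

End Defs.

(* Main.v *)
Require Import Defs.
From Stdlib Require Import List Arith Lia ZArith Classical ClassicalEpsilon FunctionalExtensionality PropExtensionality.
Import ListNotations.
Local Notation "x ** y" := (gmul x y) (at level 40, left associativity).


Lemma g_mulVr {A : group} (x : A) : x ** ginv x = gone.
Proof.
  set (y := ginv x).
  transitivity (ginv y ** y ** (x ** y)).
  - rewrite gmulV, gmul1. reflexivity.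
  - rewrite <- gmulA. rewrite (gmulA _ y x y). unfold y at 2. rewrite gmulV, gmul1.
    apply gmulV.
Qed.

Lemma g_mul1r {A : group} (x : A) : x ** gone = x.
Proof. rewrite <- (gmulV A x), gmulA, g_mulVr, gmul1. reflexivity. Qed.

Lemma g_mulKl {A : group} (x y : A) : ginv x ** (x ** y) = y.
Proof. rewrite gmulA, gmulV, gmul1. reflexivity. Qed.
Lemma g_mulKr {A : group} (x y : A) : x ** (ginv x ** y) = y.
Proof. rewrite gmulA, g_mulVr, gmul1. reflexivity. Qed.
Lemma g_mulKl' {A : group} (x y : A) : y ** x ** ginv x = y.
Proof. rewrite <- gmulA, g_mulVr, g_mul1r. reflexivity. Qed.
Lemma g_mulKr' {A : group} (x y : A) : y ** ginv x ** x = y.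
Proof. rewrite <- gmulA, gmulV, g_mul1r. reflexivity. Qed.

Lemma g_inv_uniq {A : group} (x y : A) : x ** y = gone -> y = ginv x.
Proof.
  intro H. rewrite <- (g_mulKl x y), H, g_mul1r. reflexivity.
Qed.
Lemma g_invK {A : group} (x : A) : ginv (ginv x) = x.
Proof. symmetry. apply g_inv_uniq. apply gmulV. Qed.
Lemma g_invM {A : group} (x y : A) : ginv (x ** y) = ginv y ** ginv x.
Proof.
  symmetry. apply g_inv_uniq.
  rewrite gmulA, <- (gmulA _ x y), g_mulVr, g_mul1r, g_mulVr. reflexivity.
Qed.
Lemma g_inv1 {A : group} : ginv (@gone A) = gone.
Proof. symmetry. apply g_inv_uniq. apply gmul1. Qed.

Lemma g_mul_inj_l {A : group} (a x y : A) : a ** x = a ** y -> x = y.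
Proof. intro H. rewrite <- (g_mulKl a x), H, g_mulKl. reflexivity. Qed.

Lemma sub_inv_iff {A : group} (H : A -> Prop) (x : A) :
  is_subgroup A H -> H (ginv x) -> H x.
Proof. intros [_ [_ Hi]] h. rewrite <- (g_invK x). auto. Qed.

Lemma gpow_add {A : group} (x : A) a b : gpow A x (a + b) = gpow A x a ** gpow A x b.
Proof.
  induction a; simpl. now rewrite gmul1. rewrite IHa. apply gmulA.
Qed.
Lemma gpow_mul {A : group} (x : A) a b : gpow A x (a * b) = gpow A (gpow A x a) b.
Proof.
  induction b; simpl. rewrite Nat.mul_0_r. reflexivity.
  rewrite <- IHb. replace (a * S b) with (a + a * b) by lia. apply gpow_add.
Qed.
Lemma gpow_1 {A : group} (x : A) : gpow A x 1 = x.
Proof. simpl. apply g_mul1r. Qed.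
Lemma gpow_sub {A : group} (H : A -> Prop) x k : is_subgroup A H -> H x -> H (gpow A x k).
Proof.
  intros [H1 [Hm Hi]] hx. induction k; simpl; auto.
Qed.
Lemma gpow_conj {A : group} (a f : A) k :
  gpow A (a ** f ** ginv a) k = a ** gpow A f k ** ginv a.
Proof.
  induction k; simpl. rewrite g_mul1r, g_mulVr. reflexivity.
  rewrite IHk. rewrite !gmulA. rewrite <- (gmulA _ (a ** f) (ginv a) a).
  rewrite gmulV, g_mul1r. reflexivity.
Qed.
Lemma gpow_one {A : group} k : gpow A gone k = gone.
Proof. induction k; simpl; auto. rewrite IHk. apply gmul1. Qed.


Definition leval {A : group} (l : bool * A) : A := if fst l then snd l else ginv (snd l).
Definition cancel {A : group} (l l' : bool * A) : Prop := snd l = snd l' /\ fst l <> fst l'.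

Lemma eval_cons {A : group} l w : eval_word A (l :: w) = leval l ** eval_word A w.
Proof. destruct l; reflexivity. Qed.

Lemma eval_app {A : group} u v : eval_word A (u ++ v) = eval_word A u ** eval_word A v.
Proof.
  induction u as [|l u IH]; simpl. now rewrite gmul1.
  destruct l. rewrite IH. apply gmulA.
Qed.

Lemma cancel_eval {A : group} (l l' : bool * A) : cancel l l' -> leval l ** leval l' = gone.
Proof.
  destruct l as [b x], l' as [b' x']; unfold cancel, leval; simpl; intros [<- hb].
  destruct b, b'; try congruence. apply g_mulVr. apply gmulV.
Qed.

Lemma cancel_leval {A : group} (l l' : bool * A) : cancel l l' -> leval l' = ginv (leval l).
Proof. intro h. apply g_inv_uniq. now apply cancel_eval. Qed.

Lemma reduced_cons2 {A : group} (l l' : bool * A) w :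
  reduced A (l :: l' :: w) <-> ~ cancel l l' /\ reduced A (l' :: w).
Proof. destruct l, l'; unfold cancel; simpl; tauto. Qed.

Lemma reduced_tail {A : group} (l : bool * A) w : reduced A (l :: w) -> reduced A w.
Proof. destruct l; destruct w as [|[] w]; simpl; tauto. Qed.

Lemma reduced_app_l {A : group} (u v : list (bool * A)) : reduced A (u ++ v) -> reduced A u.
Proof.
  induction u as [|l u IH]; simpl; auto.
  destruct u as [|l' u]. destruct l; simpl; tauto.
  intro h. apply reduced_cons2 in h. apply reduced_cons2. destruct h; split; auto.
Qed.
Lemma reduced_app_r {A : group} (u v : list (bool * A)) : reduced A (u ++ v) -> reduced A v.
Proof.
  induction u as [|l u IH]; simpl; auto. intro h. apply IH. eapply reduced_tail; eauto.
Qed.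

Lemma reduced_app {A : group} (u v : list (bool * A)) l :
  reduced A (u ++ [l]) -> reduced A (l :: v) -> reduced A (u ++ l :: v).
Proof.
  induction u as [|a u IH]; cbn [app]; auto.
  destruct u as [|b u].
  - cbn [app]. intros h1 h2. apply reduced_cons2 in h1. apply reduced_cons2. tauto.
  - intros h1 h2. cbn [app] in h1 |- *. apply reduced_cons2 in h1. apply reduced_cons2.
    destruct h1; split; auto.
Qed.

Lemma word_over_app {A : group} X (u v : list (bool * A)) :
  word_over A X (u ++ v) <-> word_over A X u /\ word_over A X v.
Proof. unfold word_over. rewrite Forall_app. tauto. Qed.

Lemma nonreduced_split {A : group} (w : list (bool * A)) :
  ~ reduced A w -> exists u l l' v, w = u ++ l :: l' :: v /\ cancel l l'.
Proof.
  induction w as [|l w IH]; simpl; intro h.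
  - exfalso; auto.
  - destruct w as [|l' w].
    + exfalso. apply h. destruct l; simpl; auto.
    + destruct (classic (cancel l l')) as [c|c].
      * exists [], l, l', w. auto.
      * destruct IH as (u & a & b & v & E & C).
        { intro r. apply h. apply reduced_cons2. auto. }
        exists (l :: u), a, b, v. rewrite E. auto.
Qed.

Lemma reduce_exists {A : group} X (w : list (bool * A)) :
  word_over A X w -> exists w', word_over A X w' /\ reduced A w' /\ eval_word A w' = eval_word A w.
Proof.
  remember (length w) as n eqn:En. revert w En.
  induction n as [n IH] using lt_wf_ind. intros w En hw.
  destruct (classic (reduced A w)) as [r|r]. exists w; auto.
  destruct (nonreduced_split w r) as (u & l & l' & v & E & C). subst w.
  destruct (IH (length (u ++ v))) with (w := u ++ v) as (w' & h1 & h2 & h3); auto.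
  - subst n. rewrite !length_app. simpl. lia.
  - apply word_over_app in hw. destruct hw as [hu hv]. inversion hv; subst. inversion H2; subst.
    apply word_over_app. auto.
  - exists w'. repeat split; auto. rewrite h3, !eval_app, !eval_cons.
    rewrite (gmulA _ (leval l)), cancel_eval by auto. rewrite gmul1. reflexivity.
Qed.

Fixpoint wpow {A : group} (c : list (bool * A)) n :=
  match n with 0 => [] | S k => c ++ wpow c k end.

Lemma wpow_eval {A : group} (c : list (bool * A)) n : eval_word A (wpow c n) = gpow A (eval_word A c) n.
Proof. induction n; simpl; auto. rewrite eval_app, IHn. reflexivity. Qed.

Lemma wpow_over {A : group} X (c : list (bool * A)) n : word_over A X c -> word_over A X (wpow c n).
Proof. intro h. induction n; simpl. constructor. apply word_over_app; auto. Qed.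

Lemma wpow_reduced {A : group} (l0 lz : bool * A) c' c'' n :
  reduced A (l0 :: c') -> l0 :: c' = c'' ++ [lz] -> ~ cancel lz l0 ->
  reduced A (wpow (l0 :: c') (S n)).
Proof.
  intros r E nc. induction n.
  - simpl. rewrite app_nil_r. auto.
  - change (wpow (l0 :: c') (S (S n))) with ((l0 :: c') ++ wpow (l0 :: c') (S n)).
    remember (wpow (l0 :: c') (S n)) as W eqn:EW.
    assert (EW' : W = l0 :: (c' ++ wpow (l0 :: c') n)) by (subst W; reflexivity).
    rewrite EW'. rewrite E at 1. rewrite <- app_assoc. cbn [app].
    apply reduced_app. rewrite <- E; auto.
    apply reduced_cons2. split; auto. rewrite <- EW'. exact IHn.
Qed.

Lemma free_torsion_free {A : group} (F X : A -> Prop) :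
  freely_generated A F X -> forall y n, F y -> 0 < n -> gpow A y n = gone -> y = gone.
Proof.
  intros [HF Hfree] y n hy hn hp.
  apply HF in hy. destruct hy as (w0 & ho0 & he0).
  destruct (reduce_exists X w0 ho0) as (w & ho & hr & he). subst y. rewrite <- he in hp |- *.
  destruct (classic (w = [])) as [->|hne]. reflexivity. exfalso. clear he w0 ho0.
  remember (length w) as m eqn:Em. revert w Em ho hr hne hp.
  induction m as [m IH] using lt_wf_ind. intros w Em ho hr hne hp.
  destruct w as [|l0 w2]; [congruence|].
  destruct (exists_last (l := l0 :: w2)) as (c'' & lz & Ec); [congruence|].
  destruct (classic (cancel lz l0)) as [c|c].
  - (* conjugate *)
    destruct w2 as [|l1 w2].
    { destruct c'' as [|a c'']; simpl in Ec.
      - injection Ec as ->. destruct c as [_ hb]. now apply hb.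
      - injection Ec as _ Ec. apply (f_equal (@length _)) in Ec. rewrite length_app in Ec.
        simpl in Ec. lia. }
    destruct c'' as [|a w3]. { simpl in Ec. discriminate. }
    simpl in Ec. injection Ec as Ea Ew. subst a.
    assert (hw3 : w3 <> []).
    { intro; subst w3. simpl in Ew. injection Ew as -> ->.
      apply reduced_cons2 in hr. destruct hr as [hr _]. apply hr.
      destruct c as [c1 c2]; split; auto. }
    rewrite Ew in *.
    assert (ho3 : word_over A X w3).
    { inversion ho; subst. apply word_over_app in H2. tauto. }
    assert (hr3 : reduced A w3).
    { apply reduced_tail in hr. eapply reduced_app_l; eauto. }
    apply (IH (length w3)) with (w := w3); auto.
    + subst m. simpl. rewrite length_app. simpl. lia.
    + rewrite eval_cons, eval_app, eval_cons in hp. change (eval_word A []) with (@gone A) in hp.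
      rewrite g_mul1r in hp.
      assert (Elz : leval lz = ginv (leval l0)).
      { apply cancel_leval. destruct c as [c1 c2]; split; auto. }
      rewrite Elz, gmulA in hp. rewrite gpow_conj in hp.
      apply (f_equal (fun t => ginv (leval l0) ** t ** leval l0)) in hp.
      rewrite <- !gmulA in hp. rewrite g_mulKl in hp. rewrite gmulA, g_mulKr' in hp.
      rewrite gmul1, gmulV in hp. exact hp.
  - (* cyclically reduced *)
    destruct n as [|n]; [lia|].
    apply (Hfree (wpow (l0 :: w2) (S n))).
    + apply wpow_over; auto.
    + eapply wpow_reduced; eauto.
    + simpl. discriminate.
    + rewrite wpow_eval. exact hp.
Qed.


Definition winv {A : group} (w : list (bool * A)) := rev (map (fun l => (negb (fst l), snd l)) w).

Lemma winv_eval {A : group} (w : list (bool * A)) : eval_word A (winv w) = ginv (eval_word A w).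
Proof.
  induction w as [|l w IH]; unfold winv in *. simpl. symmetry; apply g_inv1.
  cbn [map rev]. rewrite eval_app, IH, !eval_cons. change (eval_word A []) with (@gone A).
  rewrite g_mul1r, g_invM. f_equal.
  destruct l as [[] x]; unfold leval; simpl; auto. symmetry; apply g_invK.
Qed.

Lemma winv_over {A : group} X (w : list (bool * A)) : word_over A X w -> word_over A X (winv w).
Proof.
  unfold word_over, winv. intro h. apply Forall_rev. apply Forall_map.
  eapply Forall_impl; [|exact h]. simpl. auto.
Qed.

Definition lact {A : group} {T : Type} (pi pi' : A -> T -> T) (l : bool * A) (p : T) : T :=
  if fst l then pi (snd l) p else pi' (snd l) p.
Fixpoint wact {A : group} {T : Type} (pi pi' : A -> T -> T) (w : list (bool * A)) (p : T) : T :=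
  match w with [] => p | l :: w' => wact pi pi' w' (lact pi pi' l p) end.

Lemma wact_app {A : group} {T} pi pi' (u v : list (bool * A)) (p : T) :
  wact pi pi' (u ++ v) p = wact pi pi' v (wact pi pi' u p).
Proof. revert p; induction u; simpl; auto. Qed.

Lemma wact_one {A : group} {T} (F X : A -> Prop) (pi pi' : A -> T -> T) :
  freely_generated A F X ->
  (forall x p, pi' x (pi x p) = p) -> (forall x p, pi x (pi' x p) = p) ->
  forall u, word_over A X u -> eval_word A u = gone -> forall p, wact pi pi' u p = p.
Proof.
  intros [HF Hfree] h1 h2 u.
  remember (length u) as n eqn:En. revert u En.
  induction n as [n IH] using lt_wf_ind. intros u En ho he p.
  destruct (classic (reduced A u)) as [r|r].
  - destruct u as [|l u]. reflexivity. exfalso. apply (Hfree (l :: u)); auto. discriminate.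
  - destruct (nonreduced_split u r) as (a & l & l' & b & E & C). subst u.
    rewrite wact_app. simpl.
    assert (E2 : lact pi pi' l' (lact pi pi' l (wact pi pi' a p)) = wact pi pi' a p).
    { destruct l as [bb x], l' as [bb' x']; destruct C as [C1 C2]; simpl in *. subst x'.
      unfold lact; simpl. destruct bb, bb'; try congruence; auto. }
    rewrite E2, <- wact_app.
    apply (IH (length (a ++ b))); auto.
    + subst n. rewrite !length_app. simpl. lia.
    + apply word_over_app in ho. destruct ho as [hu hv]. inversion hv; subst. inversion H2; subst.
      apply word_over_app. auto.
    + rewrite <- he, !eval_app, !eval_cons. rewrite (gmulA _ (leval l)), cancel_eval by auto.
      rewrite gmul1. reflexivity.
Qed.

Lemma wact_wd {A : group} {T} (F X : A -> Prop) (pi pi' : A -> T -> T) :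
  freely_generated A F X ->
  (forall x p, pi' x (pi x p) = p) -> (forall x p, pi x (pi' x p) = p) ->
  forall u v, word_over A X u -> word_over A X v -> eval_word A u = eval_word A v ->
  forall p, wact pi pi' u p = wact pi pi' v p.
Proof.
  intros hf h1 h2 u v hu hv he p.
  transitivity (wact pi pi' (u ++ winv v ++ v) p).
  - rewrite wact_app. symmetry. eapply wact_one; eauto.
    + apply word_over_app. split; auto. apply winv_over; auto.
    + rewrite eval_app, winv_eval. apply gmulV.
  - rewrite app_assoc, wact_app. f_equal. eapply wact_one; eauto.
    + apply word_over_app. split; auto. apply winv_over; auto.
    + rewrite eval_app, winv_eval, he. apply g_mulVr.
Qed.

Lemma FI_mono {A : group} (K H H' : A -> Prop) :
  finite_index_in A K H -> (forall y, H y -> H' y) -> finite_index_in A K H'.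
Proof.
  intros [l hl] hs. exists l. intros x hx. destruct (hl x hx) as (t & ? & ? & ?). eauto.
Qed.

Lemma FI_restrict {A : group} (F N : A -> Prop) :
  is_subgroup A F -> is_subgroup A N -> finite_index A N ->
  finite_index_in A F (fun a => F a /\ N a).
Proof.
  intros [F1 [Fm Fi]] [N1 [Nm Ni]] [l hl].
  set (pick := fun t => epsilon (inhabits (@gone A)) (fun u => F u /\ N (ginv t ** u))).
  exists (map pick l). intros x hx.
  destruct (hl x I) as (t & ht & _ & hn).
  assert (hp : F (pick t) /\ N (ginv t ** pick t)).
  { apply (epsilon_spec (inhabits gone) (fun u => F u /\ N (ginv t ** u))). eauto. }
  exists (pick t). split; [apply in_map; auto|]. split; [tauto|].
  destruct hp as [hp1 hp2]. split.
  - apply Fm; auto.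
  - replace (ginv (pick t) ** x) with (ginv (ginv t ** pick t) ** (ginv t ** x)).
    + apply Nm; auto.
    + rewrite g_invM, g_invK, gmulA, g_mulKl' . reflexivity.
Qed.

Lemma FI_inter {A : group} (N1 N2 : A -> Prop) :
  is_subgroup A N1 -> is_subgroup A N2 -> finite_index A N1 -> finite_index A N2 ->
  finite_index A (fun a => N1 a /\ N2 a).
Proof.
  intros [_ [Nm1 Ni1]] [_ [Nm2 Ni2]] [l1 hl1] [l2 hl2].
  set (pick := fun t1 t2 => epsilon (inhabits (@gone A)) (fun u => N1 (ginv t1 ** u) /\ N2 (ginv t2 ** u))).
  exists (flat_map (fun t1 => map (pick t1) l2) l1). intros x _.
  destruct (hl1 x I) as (t1 & ht1 & _ & hn1).
  destruct (hl2 x I) as (t2 & ht2 & _ & hn2).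
  assert (hp : N1 (ginv t1 ** pick t1 t2) /\ N2 (ginv t2 ** pick t1 t2)).
  { apply (epsilon_spec (inhabits gone) (fun u => N1 (ginv t1 ** u) /\ N2 (ginv t2 ** u))). eauto. }
  exists (pick t1 t2). split.
  { apply in_flat_map. exists t1. split; auto. apply in_map; auto. }
  split; auto. destruct hp as [hp1 hp2].
  assert (E : forall t, ginv (pick t1 t2) ** x = ginv (ginv t ** pick t1 t2) ** (ginv t ** x)).
  { intro t. rewrite g_invM, g_invK, gmulA, g_mulKl'. reflexivity. }
  split; [rewrite (E t1) | rewrite (E t2)]; auto.
Qed.

Lemma normal_inter {A : group} (N1 N2 : A -> Prop) :
  is_normal_subgroup A N1 -> is_normal_subgroup A N2 -> is_normal_subgroup A (fun a => N1 a /\ N2 a).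
Proof.
  intros [[a1 [b1 c1]] d1] [[a2 [b2 c2]] d2]. repeat split; intuition.
Qed.

Lemma normal_full {A : group} : is_normal_subgroup A (fun _ => True) /\ finite_index A (fun _ => True).
Proof. repeat split; auto. exists [gone]. intros x _. exists gone. simpl; auto. Qed.

Fixpoint Nl {A : group} (Nf : A -> A -> Prop) (l : list A) (a : A) : Prop :=
  match l with [] => True | t :: l' => Nf t a /\ Nl Nf l' a end.

Lemma Nl_in {A : group} Nf (l : list A) a t : Nl Nf l a -> In t l -> Nf t a.
Proof. induction l; simpl; intuition. subst; auto. Qed.

Lemma Nl_ok {A : group} (Nf : A -> A -> Prop) l :
  (forall t, is_normal_subgroup A (Nf t) /\ finite_index A (Nf t)) ->
  is_normal_subgroup A (Nl Nf l) /\ finite_index A (Nl Nf l).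
Proof.
  intro h. induction l as [|t l IH]; simpl. apply normal_full.
  destruct (h t) as [n1 f1]. destruct IH as [n2 f2]. split.
  - apply (normal_inter (Nf t) (Nl Nf l)); auto.
  - apply (FI_inter (Nf t) (Nl Nf l)); auto. apply n1. apply n2.
Qed.

Lemma separate {A : group} (F L : A -> Prop) :
  is_subgroup A L -> finite_index_in A F L -> separable A L ->
  exists N, is_normal_subgroup A N /\ finite_index A N /\ forall y, F y -> N y -> L y.
Proof.
  intros hL [l hl] hsep.
  assert (hc : forall t, exists N, is_normal_subgroup A N /\ finite_index A N /\
     (~ L t -> forall n, N n -> ~ L (ginv t ** n))).
  { intro t. destruct (classic (L t)) as [lt|lt].
    - exists (fun _ => True). destruct (@normal_full A). split; [|split]; tauto.
    - assert (nl : ~ L (ginv t)). { intro h. apply lt. eapply sub_inv_iff; eauto. }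
      destruct (hsep (ginv t) nl) as (N & hn & hf & hN). exists N. split; [|split]; auto. }
  destruct (choice _ hc) as [Nf hNf].
  exists (Nl Nf l). destruct (Nl_ok Nf l) as [n1 f1].
  { intro t. destruct (hNf t); tauto. }
  split; auto. split; auto.
  intros y hy hN. destruct (hl y hy) as (t & ht & hFt & hLt).
  destruct (classic (L t)) as [lt|lt].
  - destruct hL as [_ [Lm _]]. rewrite <- (g_mulKr t y). auto.
  - exfalso. destruct (hNf t) as (_ & _ & h). apply (h lt y); auto. eapply Nl_in; eauto.
Qed.

Lemma pow_cong {A : group} (N S : A -> Prop) (u v : A) :
  is_subgroup A N -> (forall c m, S c -> N m -> N (c ** m ** ginv c)) ->
  (forall k, S (ginv (gpow A u k))) ->
  N (ginv u ** v) -> forall k, N (ginv (gpow A u k) ** gpow A v k).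
Proof.
  intros [N1 [Nm Ni]] hc hs hm k. induction k; simpl.
  - rewrite g_inv1, gmul1. auto.
  - replace (ginv (u ** gpow A u k) ** (v ** gpow A v k))
      with ((ginv (gpow A u k) ** (ginv u ** v) ** ginv (ginv (gpow A u k)))
            ** (ginv (gpow A u k) ** gpow A v k)).
    + apply Nm; auto.
    + rewrite g_invK, g_invM. rewrite !gmulA. f_equal. rewrite g_mulKl'. reflexivity.
Qed.

Lemma FI_hom {A : group} (F H : A -> Prop) (phi : A -> Z) (k : Z) :
  (0 < k)%Z ->
  (forall u v, H u -> H v -> H (u ** v)) -> (forall u, H u -> H (ginv u)) ->
  (forall u v, H u -> H v -> phi (u ** v) = (phi u + phi v)%Z) ->
  (forall u, H u -> phi (ginv u) = (- phi u)%Z) ->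
  finite_index_in A F H ->
  finite_index_in A F (fun m => H m /\ (k | phi m)%Z).
Proof.
  intros hk Hm Hi hphi hinv [l hl].
  set (pick := fun t (j : nat) => epsilon (inhabits t)
     (fun u => F u /\ H (ginv t ** u) /\ (k | phi (ginv t ** u) - Z.of_nat j)%Z)).
  exists (flat_map (fun t => map (pick t) (seq 0 (Z.to_nat k))) l).
  intros x hx. destruct (hl x hx) as (t & ht & hFt & hH).
  set (j := Z.to_nat (phi (ginv t ** x) mod k)).
  assert (hb := Z.mod_pos_bound (phi (ginv t ** x)) k hk).
  assert (hj : Z.of_nat j = (phi (ginv t ** x) mod k)%Z) by (unfold j; apply Z2Nat.id; lia).
  assert (hp : F (pick t j) /\ H (ginv t ** pick t j) /\ (k | phi (ginv t ** pick t j) - Z.of_nat j)%Z).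
  { apply (epsilon_spec (inhabits t)
     (fun u => F u /\ H (ginv t ** u) /\ (k | phi (ginv t ** u) - Z.of_nat j)%Z)).
    exists x. split; auto. split; auto. rewrite hj. rewrite Z.mod_eq by lia.
    exists (phi (ginv t ** x) / k)%Z. ring. }
  destruct hp as (hp1 & hp2 & hp3).
  exists (pick t j). split.
  { apply in_flat_map. exists t. split; auto. apply in_map. apply in_seq. lia. }
  split; auto.
  assert (E : ginv (pick t j) ** x = ginv (ginv t ** pick t j) ** (ginv t ** x)).
  { rewrite g_invM, g_invK, gmulA, g_mulKl'. reflexivity. }
  rewrite E. split; auto.
  rewrite hphi, hinv; auto.
  replace (- phi (ginv t ** pick t j) + phi (ginv t ** x))%Z with
    ((phi (ginv t ** x) - Z.of_nat j) - (phi (ginv t ** pick t j) - Z.of_nat j))%Z by ring.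
  apply Z.divide_sub_r; auto. rewrite hj, Z.mod_eq by lia. exists (phi (ginv t ** x) / k)%Z. ring.
Qed.

Ltac gnorm := repeat progress (rewrite ?g_invM, ?g_invK, ?g_inv1, <- ?gmulA, ?g_mulKl, ?g_mulKr, ?gmulV, ?g_mulVr, ?gmul1, ?g_mul1r).


Lemma min_pow {A : group} (M : A -> Prop) (x : A) m :
  0 < m -> M (gpow A x m) ->
  exists d, 0 < d /\ M (gpow A x d) /\ forall k, 0 < k < d -> ~ M (gpow A x k).
Proof.
  induction m as [m IH] using lt_wf_ind. intros hm hM.
  destruct (classic (exists k, 0 < k < m /\ M (gpow A x k))) as [[k [hk hMk]]|h].
  - apply (IH k); tauto.
  - exists m. repeat split; auto. intros k hk hMk. apply h. eauto.
Qed.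

Lemma order_exists {A : group} (M : A -> Prop) (x : A) n :
  is_subgroup A M -> ~ M x -> 0 < n -> M (gpow A x n) ->
  exists d, 2 <= d /\ forall k, M (gpow A x k) <-> Nat.divide d k.
Proof.
  intros hM hx hn hxn.
  destruct (min_pow M x n hn hxn) as (d & hd & hMd & hmin).
  exists d. split.
  - destruct (Nat.eq_dec d 1) as [->|]; [|lia]. rewrite gpow_1 in hMd. contradiction.
  - intro k. split.
    + intro hk. destruct (Nat.eq_dec (k mod d) 0) as [e|e].
      * apply Nat.mod_divide; auto; lia.
      * exfalso. apply (hmin (k mod d)).
        { split; [lia|]. apply Nat.mod_upper_bound. lia. }
        assert (E : gpow A x k = gpow A (gpow A x d) (k / d) ** gpow A x (k mod d)).
        { rewrite <- gpow_mul, <- gpow_add. f_equal. apply Nat.div_mod. lia. }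
        rewrite E in hk. pose proof hM as [_ [Mm Mi]].
        assert (h2 := Mm _ _ (Mi _ (gpow_sub M (gpow A x d) (k/d) hM hMd)) hk).
        rewrite g_mulKl in h2. exact h2.
    + intros [q ->]. rewrite Nat.mul_comm, gpow_mul. apply gpow_sub; auto.
Qed.


Lemma theta_construct {A : group} (F X M1 : A -> Prop) (x : A) (n : nat) :
  freely_generated A F X -> is_subgroup A F -> is_subgroup A M1 ->
  (forall a, M1 a -> F a) -> (forall c m, F c -> M1 m -> M1 (c ** m ** ginv c)) ->
  finite_index_in A F M1 -> F x -> ~ M1 x -> 0 < n -> M1 (gpow A x n) ->
  exists L, is_subgroup A L /\ (forall y, L y -> F y) /\ finite_index_in A F L /\
    forall y, F y -> M1 (ginv x ** y) -> ~ L (gpow A y n).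
Proof.
  intros hfree hF hM hMF hMc hMfi hx hxM hn hxn.
  pose proof hF as [F1 [Fm Fi]]. pose proof hM as [M1_1 [Mm Mi]].
  destruct (order_exists M1 x n hM hxM hn hxn) as (d & hd2 & hdiv).
  assert (Fpow : forall k, F (gpow A x k)) by (intro; apply gpow_sub; auto).
  set (T := fun y k => M1 (ginv (gpow A x k) ** y)).
  set (Zd := Z.of_nat d).
  assert (T_F : forall y k, T y k -> F y).
  { intros y k h. unfold T in h. replace y with (gpow A x k ** (ginv (gpow A x k) ** y)) by (gnorm; reflexivity).
    apply Fm; auto. }
  assert (T_uniq : forall y k k', T y k -> T y k' -> (Zd | Z.of_nat k - Z.of_nat k')%Z).
  { assert (aux : forall k k', k <= k' -> M1 (ginv (gpow A x k) ** gpow A x k') ->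
               (Zd | Z.of_nat k - Z.of_nat k')%Z).
    { intros k k' hle h. replace k' with (k + (k' - k)) in h by lia.
      rewrite gpow_add, g_mulKl in h. apply hdiv in h. destruct h as [q hq].
      exists (- Z.of_nat q)%Z. unfold Zd. lia. }
    intros y k k' h1 h2. unfold T in h1, h2.
    assert (h3 : M1 (ginv (gpow A x k) ** gpow A x k')).
    { replace (ginv (gpow A x k) ** gpow A x k') with
        ((ginv (gpow A x k) ** y) ** ginv (ginv (gpow A x k') ** y)) by (gnorm; reflexivity).
      auto. }
    destruct (Nat.le_ge_cases k k') as [hle|hle]; auto.
    assert (h4 : M1 (ginv (gpow A x k') ** gpow A x k)).
    { replace (ginv (gpow A x k') ** gpow A x k) with (ginv (ginv (gpow A x k) ** gpow A x k'))
        by (gnorm; reflexivity). auto. }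
    destruct (aux k' k hle h4) as [q hq]. exists (- q)%Z. lia. }
  assert (T_mul : forall y z k j, T y k -> T z j -> T (y ** z) (k + j)).
  { intros y z k j h1 h2. unfold T in h1, h2 |- *. rewrite gpow_add.
    replace (ginv (gpow A x k ** gpow A x j) ** (y ** z)) with
      ((ginv (gpow A x j) ** (ginv (gpow A x k) ** y) ** ginv (ginv (gpow A x j))) **
       (ginv (gpow A x j) ** z)) by (gnorm; reflexivity).
    apply Mm; auto. }
  assert (T_inv : forall y k, T y k -> T (ginv y) (k * (d - 1))).
  { intros y k h. unfold T in *.
    assert (hkd : M1 (ginv (gpow A x k ** gpow A x (k * (d - 1))))).
    { apply Mi. rewrite <- gpow_add. apply hdiv. exists k. destruct d; lia. }
    replace (ginv (gpow A x (k * (d - 1))) ** ginv y) with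
      ((ginv (gpow A x (k * (d - 1))) ** ginv (ginv (gpow A x k) ** y) ** ginv (ginv (gpow A x (k * (d - 1)))))
       ** ginv (gpow A x k ** gpow A x (k * (d - 1)))) by (gnorm; reflexivity).
    apply Mm; auto. }
  assert (T_M : forall m, M1 m -> T m 0).
  { intros m h. unfold T. simpl. rewrite g_inv1, gmul1. auto. }
  set (K0 := fun y => exists k, T y k).
  assert (K0_F : forall y, K0 y -> F y) by (intros y [k h]; eauto).
  assert (K0_1 : K0 gone) by (exists 0; apply T_M; auto).
  assert (K0_m : forall y z, K0 y -> K0 z -> K0 (y ** z)).
  { intros y z [k h1] [j h2]. exists (k + j). auto. }
  assert (K0_i : forall y, K0 y -> K0 (ginv y)).
  { intros y [k h]. exists (k * (d - 1)). auto. }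
  assert (K0_i' : forall y, K0 (ginv y) -> K0 y).
  { intros y h. rewrite <- (g_invK y). auto. }
  set (r := fun a => epsilon (inhabits (@gone A)) (fun b => F b /\ K0 (a ** ginv b))).
  assert (r_spec : forall a, F a -> F (r a) /\ K0 (a ** ginv (r a))).
  { intros a ha. apply (epsilon_spec (inhabits gone) (fun b => F b /\ K0 (a ** ginv b))).
    exists a. split; auto. rewrite g_mulVr. auto. }
  assert (r_canon : forall a b, K0 (a ** ginv b) -> r a = r b).
  { intros a b h. unfold r. f_equal. apply functional_extensionality. intro c.
    apply propositional_extensionality. split; intros [h1 h2]; split; auto.
    - replace (b ** ginv c) with (ginv (a ** ginv b) ** (a ** ginv c)) by (gnorm; reflexivity). auto.
    - replace (a ** ginv c) with ((a ** ginv b) ** (b ** ginv c)) by (gnorm; reflexivity). auto. }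
  clearbody r.
  assert (r_sand : forall a y, F a -> F y -> K0 (r a ** y ** ginv (r (a ** y)))).
  { intros a y ha hy. destruct (r_spec a ha) as [_ h1]. destruct (r_spec (a ** y)) as [_ h2]; auto.
    replace (r a ** y ** ginv (r (a ** y))) with (ginv (a ** ginv (r a)) ** (a ** y ** ginv (r (a ** y))))
      by (gnorm; reflexivity). auto. }
  set (c := fun a s => epsilon (inhabits 0) (fun k => T (r a ** s ** ginv (r (a ** s))) k)).
  assert (c_spec : forall a s, F a -> F s -> T (r a ** s ** ginv (r (a ** s))) (c a s)).
  { intros a s ha hs. apply (epsilon_spec (inhabits 0) (fun k => T (r a ** s ** ginv (r (a ** s))) k)).
    apply r_sand; auto. }
  assert (c_canon : forall a b s, r a = r b -> r (a ** s) = r (b ** s) -> c a s = c b s).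
  { intros a b s h1 h2. unfold c. rewrite h1, h2. reflexivity. }
  clearbody c.
  set (cz := fun a s => Z.of_nat (c a s)).
  set (pi := fun s (p : A * Z) => (fst p ** s, (snd p + cz (fst p) s)%Z)).
  set (pi' := fun s (p : A * Z) => (fst p ** ginv s, (snd p - cz (fst p ** ginv s) s)%Z)).
  assert (h1 : forall s p, pi' s (pi s p) = p).
  { intros s [a z]. unfold pi, pi'; simpl. rewrite g_mulKl'. f_equal. lia. }
  assert (h2 : forall s p, pi s (pi' s p) = p).
  { intros s [a z]. unfold pi, pi'; simpl. rewrite g_mulKr'. f_equal. lia. }
  pose proof hfree as [HF Hfree].
  assert (XF : forall s, X s -> F s).
  { intros s hs. apply HF. exists [(true, s)]. split. constructor; auto. simpl. apply g_mul1r. }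
  assert (evalF : forall w, word_over A X w -> F (eval_word A w)).
  { intros w hw. apply HF. eauto. }
  set (W := fun w a => snd (wact pi pi' w (a, 0%Z))).
  assert (pi_eq : forall s a z, pi s (a, z) = (a ** s, (z + cz a s)%Z)) by reflexivity.
  assert (pi'_eq : forall s a z, pi' s (a, z) = (a ** ginv s, (z - cz (a ** ginv s) s)%Z)) by reflexivity.
  assert (W1 : forall w a z, fst (wact pi pi' w (a, z)) = a ** eval_word A w).
  { induction w as [|[b s] w IH]; intros a z; cbn [wact]. simpl. symmetry; apply g_mul1r.
    rewrite eval_cons. unfold lact; destruct b; cbn [fst snd]; rewrite ?pi_eq, ?pi'_eq, IH; unfold leval; cbn [fst snd]; symmetry; apply gmulA. }
  assert (W2 : forall w a z, snd (wact pi pi' w (a, z)) = (z + W w a)%Z).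
  { unfold W. induction w as [|[b s] w IH]; intros a z; cbn [wact]. simpl; lia.
    unfold lact; destruct b; cbn [fst snd]; rewrite ?pi_eq, ?pi'_eq;
      rewrite (IH _ (z + _)%Z) || rewrite (IH _ (z - _)%Z);
      rewrite (IH _ (0 + _)%Z) || rewrite (IH _ (0 - _)%Z); lia. }
  assert (W3 : forall w a b, word_over A X w -> F a -> F b -> K0 (a ** ginv b) -> W w a = W w b).
  { induction w as [|[bb s] w IH]; intros a b hw ha hb hab. reflexivity.
    inversion hw as [|? ? hs hw']; subst. simpl in hs.
    unfold W; cbn [wact]. unfold lact; destruct bb; cbn [fst snd]; rewrite ?pi_eq, ?pi'_eq.
    - rewrite !W2. assert (E : cz a s = cz b s).
      { unfold cz. f_equal. apply c_canon. apply r_canon; auto.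
        apply r_canon. replace (a ** s ** ginv (b ** s)) with (a ** ginv b) by (gnorm; reflexivity). auto. }
      rewrite E, (IH (a ** s) (b ** s)); auto.
      replace (a ** s ** ginv (b ** s)) with (a ** ginv b) by (gnorm; reflexivity). auto.
    - rewrite !W2. assert (E : cz (a ** ginv s) s = cz (b ** ginv s) s).
      { unfold cz. f_equal. apply c_canon.
        - apply r_canon. replace (a ** ginv s ** ginv (b ** ginv s)) with (a ** ginv b) by (gnorm; reflexivity). auto.
        - rewrite !g_mulKr'. apply r_canon; auto. }
      rewrite E, (IH (a ** ginv s) (b ** ginv s)); auto.
      replace (a ** ginv s ** ginv (b ** ginv s)) with (a ** ginv b) by (gnorm; reflexivity). auto. }
  assert (W4 : forall w a k, word_over A X w -> F a ->
     T (r a ** eval_word A w ** ginv (r (a ** eval_word A w))) k -> (Zd | W w a - Z.of_nat k)%Z).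
  { induction w as [|[bb s] w IH]; intros a k hw ha hT.
    - simpl in hT. rewrite !g_mul1r, g_mulVr in hT. unfold W; simpl.
      destruct (T_uniq _ _ _ hT (T_M gone M1_1)) as [q hq]. exists (- q)%Z. lia.
    - inversion hw as [|? ? hs hw']; subst. simpl in hs.
      assert (hFw := evalF w hw').
      unfold W; cbn [wact]. unfold lact; destruct bb; cbn [fst snd]; rewrite ?pi_eq, ?pi'_eq.
      + rewrite W2.
        destruct (r_sand (a ** s) (eval_word A w)) as [k2 hk2]; auto.
        assert (hI := IH (a ** s) k2 hw' ltac:(auto) hk2).
        assert (hc := c_spec a s ha (XF s hs)).
        assert (hT2 := T_mul _ _ _ _ hc hk2).
        replace (r a ** s ** ginv (r (a ** s)) ** (r (a ** s) ** eval_word A w ** ginv (r (a ** s ** eval_word A w))))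
          with (r a ** (s ** eval_word A w) ** ginv (r (a ** (s ** eval_word A w)))) in hT2
          by (gnorm; reflexivity).
        simpl in hT.
        destruct (T_uniq _ _ _ hT hT2) as [q1 hq1].
        destruct hI as [q2 hq2]. unfold cz. exists (q2 - q1)%Z. lia.
      + rewrite W2.
        assert (ha' : F (a ** ginv s)) by (apply Fm; auto).
        destruct (r_sand (a ** ginv s) (eval_word A w)) as [k2 hk2]; auto.
        assert (hI := IH (a ** ginv s) k2 hw' ha' hk2).
        assert (hc := c_spec (a ** ginv s) s ha' (XF s hs)).
        rewrite g_mulKr' in hc.
        assert (hci := T_inv _ _ hc).
        assert (hT2 := T_mul _ _ _ _ hci hk2).
        replace (ginv (r (a ** ginv s) ** s ** ginv (r a)) ** (r (a ** ginv s) ** eval_word A w ** ginv (r (a ** ginv s ** eval_word A w))))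
          with (r a ** (ginv s ** eval_word A w) ** ginv (r (a ** (ginv s ** eval_word A w)))) in hT2
          by (gnorm; reflexivity).
        simpl in hT.
        destruct (T_uniq _ _ _ hT hT2) as [q1 hq1].
        destruct hI as [q2 hq2]. unfold cz. exists (q2 - q1 - Z.of_nat (c (a ** ginv s) s))%Z.
        unfold Zd in *. rewrite Nat2Z.inj_add, Nat2Z.inj_mul, Nat2Z.inj_sub in hq1 by lia.
        simpl in hq1. nia.
  }
  set (wd := fun y => epsilon (inhabits (@nil (bool * A))) (fun w => word_over A X w /\ eval_word A w = y)).
  assert (wd_spec : forall y, F y -> word_over A X (wd y) /\ eval_word A (wd y) = y).
  { intros y hy. apply (epsilon_spec (inhabits (@nil (bool * A))) (fun w => word_over A X w /\ eval_word A w = y)).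
    apply HF; auto. }
  clearbody wd.
  set (V := fun a y => W (wd y) a).
  assert (V_word : forall a y w, F y -> word_over A X w -> eval_word A w = y -> V a y = W w a).
  { intros a y w hy hw he. unfold V, W. destruct (wd_spec y hy). f_equal.
    apply (wact_wd F X pi pi' hfree h1 h2); auto. congruence. }
  assert (V_mul : forall a y z, F y -> F z -> V a (y ** z) = (V a y + V (a ** y) z)%Z).
  { intros a y z hy hz. destruct (wd_spec y hy) as [wy ey]. destruct (wd_spec z hz) as [wz ez].
    rewrite (V_word a (y ** z) (wd y ++ wd z)); auto.
    2: apply word_over_app; auto. 2: rewrite eval_app; congruence.
    unfold W, V. rewrite wact_app.
    rewrite (surjective_pairing (wact pi pi' (wd y) (a, 0%Z))).
    rewrite W2, W1, ey. unfold W. lia. }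
  assert (V_coset : forall a b y, F y -> F a -> F b -> K0 (a ** ginv b) -> V a y = V b y).
  { unfold V; intros; apply W3; auto; apply wd_spec; auto. }
  assert (V_cong : forall a y k, F a -> F y -> T (r a ** y ** ginv (r (a ** y))) k -> (Zd | V a y - Z.of_nat k)%Z).
  { intros a y k ha hy hT. destruct (wd_spec y hy) as [w1 e1]. unfold V. apply W4; auto. rewrite e1. auto. }
  set (th := fun y => V gone y).
  assert (th_mul : forall y z, K0 y -> F z -> th (y ** z) = (th y + th z)%Z).
  { intros y z hy hz. unfold th. rewrite V_mul; auto. rewrite gmul1. f_equal. apply V_coset; auto.
    all: try (rewrite g_inv1, g_mul1r; auto). }
  assert (th_one : th gone = 0%Z).
  { unfold th. rewrite (V_word gone gone []); auto. constructor. }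
  assert (th_inv : forall y, K0 y -> th (ginv y) = (- th y)%Z).
  { intros y hy. assert (E := th_mul y (ginv y) hy (Fi _ (K0_F _ hy))). rewrite g_mulVr, th_one in E. lia. }
  assert (th_pow : forall y m, K0 y -> th (gpow A y m) = (Z.of_nat m * th y)%Z).
  { intros y m hy. induction m; simpl gpow. rewrite th_one. lia.
    rewrite th_mul; auto. rewrite IHm. lia. apply gpow_sub; auto. }
  assert (th_T : forall y k, K0 y -> T y k -> (Zd | th y - Z.of_nat k)%Z).
  { intros y k hy hTy. destruct (r_spec gone F1) as [hr1 hr2]. rewrite gmul1 in hr2.
    apply K0_i' in hr2. destruct hr2 as [j hj].
    assert (E : r (gone ** y) = r gone) by (apply r_canon; rewrite gmul1, g_inv1, g_mul1r; auto).
    assert (hT3 := T_mul _ _ _ _ (T_mul _ _ _ _ hj hTy) (T_inv _ _ hj)).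
    assert (hc : (Zd | V gone y - Z.of_nat (j + k + j * (d - 1)))%Z).
    { apply V_cong; auto. rewrite E. exact hT3. }
    destruct hc as [q hq]. exists (q + Z.of_nat j)%Z. unfold th.
    unfold Zd in *. rewrite !Nat2Z.inj_add, Nat2Z.inj_mul, Nat2Z.inj_sub in hq by lia.
    simpl in hq. nia. }
  set (L := fun m => K0 m /\ (Z.of_nat n * Zd | th m)%Z).
  exists L. split; [|split; [|split]].
  - split; [|split].
    + split; auto. rewrite th_one. apply Z.divide_0_r.
    + intros u v [hu du] [hv dv]. split; auto. rewrite th_mul; auto. apply Z.divide_add_r; auto.
    + intros u [hu du]. split; auto. rewrite th_inv; auto. apply Z.divide_opp_r; auto.
  - intros y [hy _]. auto.
  - apply (FI_hom F K0 th); auto.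
    + unfold Zd. lia.
    + apply (FI_mono _ _ _ hMfi). intros; exists 0; apply T_M; auto.
  - intros y hy hxy [hK hL]. assert (hT1 : T y 1) by (unfold T; rewrite gpow_1; auto).
    assert (hK1 : K0 y) by (exists 1; auto).
    rewrite th_pow in hL; auto. destruct (th_T y 1 hK1 hT1) as [q hq]. destruct hL as [t ht].
    unfold Zd in *. simpl in hq.
    assert (E : (Z.of_nat n * (1 + q * Z.of_nat d) = Z.of_nat n * (t * Z.of_nat d))%Z) by nia.
    apply Z.mul_cancel_l in E; [|lia]. assert (hd : (Z.of_nat d >= 2)%Z) by lia.
    assert (hc : (t - q >= 1 \/ t - q <= 0)%Z) by lia. destruct hc; nia.
Qed.


Theorem lemma3p5 (A : group) (F : A -> Prop) (g : A) :
  is_free_subgroup A F ->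
  g <> gone ->
  finite_order A g ->
  (forall H : A -> Prop, is_subgroup A H -> (forall x, H x -> F x) ->
     finite_index_in A F H -> separable A H) ->
  exists N : A -> Prop,
    is_normal_subgroup A N /\ finite_index A N /\
    (* psi(g) is not in psi(F)^{A/N}: g N <> a f a^-1 N for all a in A, f in F *)
    forall a f, F f -> ~ N (gmul (ginv g) (gmul (gmul a f) (ginv a))).
Proof.
  intros [hF [X hfree]] hg [n [hn hgn]] hsep.
  pose proof hF as [F1 [Fm Fi]].
  assert (hgF : ~ F g).
  { intro h. apply hg. eapply (free_torsion_free F X hfree g n); eauto. }
  assert (hFfi : finite_index_in A F F).
  { exists [gone]. intros y hy. exists gone. simpl. rewrite g_inv1, gmul1. auto. }
  destruct (hsep F hF (fun _ h => h) hFfi g hgF) as (N1 & hN1 & hfi1 & hN1g).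
  pose proof hN1 as [[N1_1 [N1m N1i]] N1c].
  assert (hgN1 : ~ N1 g).
  { intro h. apply (hN1g (ginv g)); auto. rewrite g_mulVr. auto. }
  set (M1 := fun a => F a /\ N1 a).
  assert (hM : is_subgroup A M1).
  { split; [|split]; unfold M1; [split; auto| intros u v [] []; split; auto | intros u []; split; auto]. }
  assert (hMF : forall a, M1 a -> F a) by (intros a []; auto).
  assert (hMc : forall c m, F c -> M1 m -> M1 (c ** m ** ginv c)).
  { intros c m hc [h1 h2]. split; auto. }
  assert (hMfi : finite_index_in A F M1) by (apply FI_restrict; auto; apply hN1).
  pose proof hMfi as [R hR].
  assert (hc : forall t, exists N, is_normal_subgroup A N /\ finite_index A N /\
     (F t -> ~ M1 t -> M1 (gpow A t n) -> forall y, F y -> M1 (ginv t ** y) -> ~ N (gpow A y n))).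
  { intro t. destruct (classic (F t /\ ~ M1 t /\ M1 (gpow A t n))) as [(h1 & h2 & h3)|hb].
    - destruct (theta_construct F X M1 t n hfree hF hM hMF hMc hMfi h1 h2 hn h3)
        as (L & hL & hLF & hLfi & hLp).
      destruct (separate F L hL hLfi (hsep L hL hLF hLfi)) as (N & hN & hNfi & hNL).
      exists N. split; auto. split; auto. intros _ _ _ y hy hty hNy.
      apply (hLp y hy hty). apply hNL; auto. apply gpow_sub; auto.
    - exists (fun _ => True). destruct (@normal_full A). split; [tauto|split; [tauto|]].
      intros. exfalso. auto. }
  destruct (choice _ hc) as [Nf hNf].
  destruct (Nl_ok Nf R) as [hNl hNlfi]. { intro t. destruct (hNf t); tauto. }
  exists (fun a => N1 a /\ Nl Nf R a). split; [|split].
  - apply normal_inter; auto.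
  - apply FI_inter; [apply hN1 | apply hNl | auto | auto].
  - intros a f hf hN.
    set (h := a ** f ** ginv a) in hN.
    assert (hNn : is_normal_subgroup A (fun a => N1 a /\ Nl Nf R a)) by (apply normal_inter; auto).
    assert (hp := pow_cong (fun a => N1 a /\ Nl Nf R a) (fun _ => True) g h (proj1 hNn)
                  ltac:(intros; apply hNn; auto) (fun _ => I) hN n).
    rewrite hgn, g_inv1, gmul1 in hp. unfold h in hp. rewrite gpow_conj in hp.
    assert (hfn : N1 (gpow A f n) /\ Nl Nf R (gpow A f n)).
    { replace (gpow A f n) with (ginv a ** (a ** gpow A f n ** ginv a) ** ginv (ginv a)) by (gnorm; reflexivity).
      apply hNn; auto. }
    assert (hfM : ~ M1 f).
    { intros [_ hf1]. apply hgN1. destruct hN as [hN _].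
      assert (hh : N1 h) by (apply N1c; auto).
      apply (sub_inv_iff N1); [apply hN1|].
      replace (ginv g) with ((ginv g ** h) ** ginv h) by (gnorm; reflexivity). auto. }
    destruct (hR f hf) as (t & ht & hFt & htf).
    assert (htM : ~ M1 t).
    { intro h1. apply hfM. replace f with (t ** (ginv t ** f)) by (gnorm; reflexivity). apply hM; auto. }
    assert (htn : M1 (gpow A t n)).
    { assert (hq := pow_cong M1 F t f hM hMc ltac:(intro; apply Fi; apply gpow_sub; auto) htf n).
      replace (gpow A t n) with (gpow A f n ** ginv (ginv (gpow A t n) ** gpow A f n)) by (gnorm; reflexivity).
      apply hM; [split; [apply gpow_sub; auto | tauto]|]. apply hM. auto. }
    destruct (hNf t) as (_ & _ & hbad).
    apply (hbad hFt htM htn f hf htf). eapply Nl_in; [apply hfn | exact ht].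
Qed.
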